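(* Let $T$ be a countably infinite graph. Then every countably infinite, infinitely connected graph $H$ contains a spanning subgraph isomorphic to $T$ if and only if $T$ is a forest and either (i) some component of $T$ has unbounded radius, or (ii) $T$ has infinitely many components.
   Context: A graph $H$ is infinitely connected if it is infinite and $H-F$ is connected for every finite $F\subseteq V(H)$. A connected graph has radius at most $k$ if there is a vertex $u$ such that every vertex is joined to $u$ by a path of length at most $k$; it has unbounded radius if no such $k$ exists. A spanning subgraph of $H$ is a subgraph with vertex set $V(H)$. *)

(* Defs.v *)
From Stdlib Require Import List.
Import ListNotations.

Record graph := mkGraph {
  V :> Type;
  adj : V -> V -> Prop;
  adj_sym : forall x y, adj x y -> adj y x;
  adj_irrefl : forall x, ~ adj x x
}.

Definition finite_set {A : Type} (P : A -> Prop) : Prop :=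
  exists l : list A, forall x, P x -> In x l.

Definition infinite_graph (G : graph) : Prop :=
  ~ finite_set (fun _ : V G => True).

Definition countably_infinite (G : graph) : Prop :=
  exists (f : V G -> nat) (g : nat -> V G),
    (forall x, g (f x) = x) /\ (forall n, f (g n) = n).

Fixpoint walk (G : graph) (x : V G) (l : list (V G)) : Prop :=
  match l with
  | [] => True
  | y :: l' => adj G x y /\ walk G y l'
  end.

(** A path from u to v with vertex sequence u :: l (distinct vertices);
    its length (number of edges) is [length l]. *)
Definition is_path (G : graph) (u v : V G) (l : list (V G)) : Prop :=
  walk G u l /\ last l u = v /\ NoDup (u :: l).

Definition joined (G : graph) (u v : V G) : Prop :=
  exists l, is_path G u v l.

Definition joined_within (G : graph) (k : nat) (u v : V G) : Prop :=
  exists l, is_path G u v l /\ length l <= k.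

Definition connected (G : graph) : Prop :=
  forall u v : V G, joined G u v.

Definition radius_le (G : graph) (k : nat) : Prop :=
  exists u : V G, forall v : V G, joined_within G k u v.

Definition unbounded_radius (G : graph) : Prop :=
  forall k, ~ radius_le G k.

Definition has_cycle (G : graph) : Prop :=
  exists (v0 : V G) (l : list (V G)),
    2 <= length l /\ walk G v0 l /\ NoDup (v0 :: l) /\ adj G (last l v0) v0.

Definition forest (G : graph) : Prop := ~ has_cycle G.

Definition induced (G : graph) (P : V G -> Prop) : graph.
Proof.
  refine (@mkGraph {x : V G | P x} (fun x y => adj G (proj1_sig x) (proj1_sig y)) _ _).
  - intros x y H; exact (adj_sym G _ _ H).
  - intros x; exact (adj_irrefl G _).
Defined.

Definition component (G : graph) (x : V G) : graph :=
  induced G (fun y => joined G x y).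

Definition some_component_unbounded_radius (G : graph) : Prop :=
  exists x : V G, unbounded_radius (component G x).

(** Infinitely many components: infinitely many pairwise non-joined vertices. *)
Definition infinitely_many_components (G : graph) : Prop :=
  exists f : nat -> V G, forall i j, i <> j -> ~ joined G (f i) (f j).

Definition delete (G : graph) (F : V G -> Prop) : graph :=
  induced G (fun x => ~ F x).

Definition infinitely_connected (H : graph) : Prop :=
  infinite_graph H /\
  forall F : V H -> Prop, finite_set F -> connected (delete H F).

Definition isomorphic (G1 G2 : graph) : Prop :=
  exists (f : V G1 -> V G2) (g : V G2 -> V G1),
    (forall x, g (f x) = x) /\ (forall y, f (g y) = y) /\
    (forall x y, adj G1 x y <-> adj G2 (f x) (f y)).

Record spanning_subgraph (H : graph) := {
  sadj : V H -> V H -> Prop;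
  sadj_sym : forall x y, sadj x y -> sadj y x;
  sadj_irrefl : forall x, ~ sadj x x;
  sadj_sub : forall x y, sadj x y -> adj H x y
}.

Definition sub_graph (H : graph) (S : spanning_subgraph H) : graph :=
  @mkGraph (V H) (sadj H S) (sadj_sym H S) (sadj_irrefl H S).

Definition has_spanning_copy (H T : graph) : Prop :=
  exists S : spanning_subgraph H, isomorphic T (sub_graph H S).

(* Main.v *)
Require Import Defs.
From Stdlib Require Import List Lia Arith Classical ClassicalEpsilon ProofIrrelevance FinFun.
From Stdlib Require Cantor.
Import ListNotations.


Section Gen.
Variable G : graph.

Inductive rch (P : V G -> Prop) (x : V G) : V G -> Prop :=
| rch_refl : P x -> rch P x x
| rch_step : forall y z, rch P x y -> adj G y z -> P z -> rch P x z.

Lemma rch_P P x y : rch P x y -> P x /\ P y.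
Proof. induction 1; tauto. Qed.

Lemma rch_trans P x y z : rch P x y -> rch P y z -> rch P x z.
Proof. intros H1 H2; induction H2; auto. econstructor; eauto. Qed.

Lemma rch_one P x y : P x -> P y -> adj G x y -> rch P x y.
Proof. intros; econstructor; eauto. constructor; auto. Qed.

Lemma rch_sym P x y : rch P x y -> rch P y x.
Proof.
  induction 1. constructor; auto.
  apply rch_trans with y; auto. apply rch_one; auto.
  apply (rch_P _ _ _ H). apply adj_sym; auto.
Qed.

Lemma rch_mono (P Q : V G -> Prop) x y : (forall z, P z -> Q z) -> rch P x y -> rch Q x y.
Proof. intros HPQ; induction 1. constructor; auto. econstructor; eauto. Qed.

Lemma rch_cons P x y z : P x -> adj G x y -> rch P y z -> rch P x z.
Proof. intros. apply rch_trans with y; auto. apply rch_one; auto. apply (rch_P _ _ _ H1). Qed.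

Lemma last_cons (a d : V G) l : last (a :: l) d = last l a.
Proof. revert a d; induction l as [|b l IH]; intros a d; auto.
  change (last (b :: l) d = last (b :: l) a). rewrite !IH. auto. Qed.

Lemma last_app_gen (l1 l2 : list (V G)) x : last (l1 ++ l2) x = last l2 (last l1 x).
Proof.
  revert x; induction l1 as [|a l1 IH]; simpl; auto.
  intros x. change (last (a :: (l1 ++ l2)) x = last l2 (last (a :: l1) x)).
  rewrite !last_cons. apply IH.
Qed.

Lemma walk_app x l1 l2 : walk G x (l1 ++ l2) <-> walk G x l1 /\ walk G (last l1 x) l2.
Proof.
  revert x; induction l1; intros x. simpl; tauto.
  cbn [app walk]. rewrite IHl1. rewrite last_cons. tauto.
Qed.

Lemma walk_rch P x l : walk G x l -> (forall z, In z (x :: l) -> P z) -> rch P x (last l x).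
Proof.
  revert x; induction l; intros x Hw HP. simpl; constructor; auto. apply HP; simpl; auto.
  rewrite last_cons. destruct Hw as [H1 H2]. apply rch_cons with a; auto. apply HP; simpl; auto.
  apply IHl; auto.
  intros z Hz; apply HP; simpl in *; tauto.
Qed.

Lemma rch_walk P x y : rch P x y ->
  exists l, walk G x l /\ last l x = y /\ (forall z, In z (x :: l) -> P z).
Proof.
  induction 1.
  - exists []; simpl; repeat split; auto. intros z [<-|[]]; auto.
  - destruct IHrch as (l & Hw & Hl & HP).
    exists (l ++ [z]). rewrite walk_app, last_app_gen. simpl. subst y.
    repeat split; auto. intros w Hw'. simpl in Hw'. rewrite in_app_iff in Hw'.
    simpl in Hw'. destruct Hw' as [<-|[Hw'|[<-|[]]]]; auto; apply HP; simpl; auto.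
Qed.

Lemma shorten x l : walk G x l -> exists l', walk G x l' /\ last l' x = last l x /\
  NoDup (x :: l') /\ length l' <= length l /\ incl l' l.
Proof.
  revert x; induction l as [|y l1 IH]; intros x Hw.
  - exists []; simpl; repeat split; auto. constructor; auto. constructor. intros z [].
  - destruct Hw as [Hxy Hw]. destruct (IH y Hw) as (l1' & Hw' & Hl' & Hnd & Hlen & Hinc).
    destruct (classic (In x (y :: l1'))) as [Hin|Hin].
    + destruct (in_split _ _ Hin) as (a & b & Hab).
      assert (Hw2 : walk G x (y :: l1')) by (simpl; auto).
      rewrite Hab in Hw2. rewrite walk_app in Hw2. destruct Hw2 as [_ Hw2].
      destruct Hw2 as [_ Hw2].
      exists b. repeat split.
      * exact Hw2.
      * rewrite last_cons, <- Hl', <- (last_cons y x l1'), Hab, last_app_gen, last_cons. auto.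
      * rewrite Hab in Hnd. apply NoDup_app_remove_l in Hnd. auto.
      * assert (length (y :: l1') = length (a ++ x :: b)) by (rewrite Hab; auto).
        rewrite length_app in H; simpl in *; lia.
      * intros z Hz. assert (In z (y :: l1')) by (rewrite Hab; apply in_or_app; simpl; auto).
        destruct H; simpl; auto.
    + exists (y :: l1'). split; [|split; [|split; [|split]]].
      * simpl; auto.
      * rewrite !last_cons. auto.
      * constructor; auto.
      * simpl; lia.
      * intros z [<-|Hz]; simpl; auto.
Qed.

Lemma rch_path P x y : rch P x y ->
  exists l, is_path G x y l /\ (forall z, In z (x :: l) -> P z).
Proof.
  intros H. destruct (rch_walk _ _ _ H) as (l & Hw & Hl & HP).
  destruct (shorten x l Hw) as (l' & Hw' & Hl' & Hnd & _ & Hinc).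
  exists l'. split. split; auto. split; auto. congruence.
  intros z [<-|Hz]; apply HP; simpl; auto.
Qed.

Lemma rch_joined P x y : rch P x y -> joined G x y.
Proof. intros H; destruct (rch_path _ _ _ H) as (l & Hl & _). exists l; auto. Qed.

Lemma joined_rch x y : joined G x y -> rch (fun _ => True) x y.
Proof.
  intros (l & Hw & Hl & _). subst y. apply walk_rch; auto.
Qed.

Lemma joined_sym x y : joined G x y -> joined G y x.
Proof. intros H. apply (rch_joined (fun _ => True)). apply rch_sym, joined_rch; auto. Qed.


End Gen.

Section Ind.
Variable G : graph.
Variable P : V G -> Prop.

Lemma rch_induced x y : rch G P x y -> forall px py,
  rch (induced G P) (fun _ => True) (exist _ x px) (exist _ y py).
Proof.
  induction 1; intros px py.
  - rewrite (proof_irrelevance _ px py). constructor; auto.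
  - assert (py' : P y) by apply (rch_P _ _ _ _ H).
    apply rch_step with (exist _ y py'); auto.
Qed.

Lemma walk_lower (a : V (induced G P)) l : walk (induced G P) a l ->
  walk G (proj1_sig a) (map (@proj1_sig _ _) l).
Proof. revert a; induction l; simpl; auto. intros b [H1 H2]; split; auto. Qed.

Lemma last_lower (a : V (induced G P)) l :
  proj1_sig (last l a) = last (map (@proj1_sig _ _) l) (proj1_sig a).
Proof.
  revert a; induction l as [|b l IH]; intros a; auto.
  change (proj1_sig (last (b :: l) a) = last (proj1_sig b :: map (@proj1_sig _ _) l) (proj1_sig a)).
  rewrite last_cons, last_cons. apply IH.
Qed.

Lemma sig_inj (a b : V (induced G P)) : proj1_sig a = proj1_sig b -> a = b.
Proof.
  destruct a as [a pa], b as [b pb]; simpl; intros ->.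
  rewrite (proof_irrelevance _ pa pb); auto.
Qed.

Lemma NoDup_lower (l : list (V (induced G P))) : NoDup l -> NoDup (map (@proj1_sig _ _) l).
Proof.
  induction 1; simpl; constructor; auto.
  intros Hin. apply in_map_iff in Hin. destruct Hin as (y & Hy & Hin).
  apply sig_inj in Hy. subst; auto.
Qed.

Lemma walk_lift x l : walk G x l -> (forall z, In z l -> P z) -> forall px,
  exists l' : list (V (induced G P)), walk (induced G P) (exist _ x px) l' /\
    map (@proj1_sig _ _) l' = l.
Proof.
  revert x; induction l as [|y l IH]; intros x Hw HP px.
  - exists []; simpl; auto.
  - destruct Hw as [Hxy Hw]. assert (py : P y) by (apply HP; simpl; auto).
    destruct (IH y Hw (fun z Hz => HP z (or_intror Hz)) py) as (l' & Hw' & Hm).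
    exists (exist _ y py :: l'). simpl. rewrite Hm. auto.
Qed.
End Ind.


Section HFacts.
Variable H : graph.
Hypothesis HI : infinitely_connected H.

Lemma Hfresh (l : list (V H)) : exists h, ~ In h l.
Proof.
  destruct HI as [Hinf _]. apply NNPP; intros Hn. apply Hinf. exists l.
  intros x _. apply NNPP; intros Hx. apply Hn; eauto.
Qed.

Lemma Hpath hd h (l : list (V H)) : ~ In h l -> exists xs, walk H hd xs /\ last xs hd = h /\
  NoDup (hd :: xs) /\ (forall x, In x xs -> ~ In x l).
Proof.
  intros Hh. destruct HI as [_ Hc].
  set (F := fun y => In y l /\ y <> hd).
  assert (HF : finite_set F) by (exists l; intros x [Hx _]; auto).
  assert (p1 : ~ F hd) by (intros [_ Hx]; auto).
  assert (p2 : ~ F h) by (intros [Hx _]; auto).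
  destruct (Hc F HF (exist _ hd p1) (exist _ h p2)) as (l' & Hw & Hl & Hnd).
  exists (map (@proj1_sig _ _) l'). split; [|split; [|split]].
  - apply (walk_lower H (fun x => ~ F x)) in Hw. exact Hw.
  - pose proof (last_lower H (fun x => ~ F x) (exist _ hd p1) l') as E.
    simpl in E. rewrite <- E. set (a := exist _ hd p1) in *. exact (f_equal (@proj1_sig _ (fun x => ~ F x)) Hl).
  - apply (NoDup_lower H (fun x => ~ F x)) in Hnd. exact Hnd.
  - intros x Hx Hxl. apply in_map_iff in Hx. destruct Hx as ([y py] & Hy & Hin).
    simpl in Hy. subst y. apply py. split; auto. intros ->.
    apply (NoDup_lower H (fun x => ~ F x)) in Hnd. simpl in Hnd. inversion Hnd; subst.
    apply H2. apply in_map_iff. exists (exist _ hd py); auto.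
Qed.

Lemma Hnbr h0 (l : list (V H)) : exists h, adj H h0 h /\ ~ In h l.
Proof.
  destruct (Hfresh (h0 :: l)) as [w Hw].
  assert (Hw' : ~ In w l) by (intros X; apply Hw; simpl; auto).
  destruct (Hpath h0 w l Hw') as (xs & Hwk & Hl & Hnd & Hx).
  destruct xs as [|x1 xs]. simpl in Hl. subst; simpl in Hw; tauto.
  exists x1. destruct Hwk; split; auto. apply Hx; simpl; auto.
Qed.
End HFacts.


Section BF.
Variables T H : graph.
Hypothesis HF : forest T.
Hypothesis HI : infinitely_connected H.

Definition dom (st : list (V T * V H)) t := exists h, In (t, h) st.
Definition ran (st : list (V T * V H)) h := exists t, In (t, h) st.

Definition Inv st :=
  (forall t h h', In (t, h) st -> In (t, h') st -> h = h') /\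
  (forall t t' h, In (t, h) st -> In (t', h) st -> t = t') /\
  (forall t h t' h', In (t, h) st -> In (t', h') st -> adj T t t' -> adj H h h') /\
  (forall t t', dom st t -> dom st t' -> rch T (fun _ => True) t t' -> rch T (dom st) t t').

Lemma Inv_nil : Inv [].
Proof. repeat split; intros; simpl in *; try tauto. destruct H0 as [? []]. Qed.

Lemma ran_map st h : ran st h <-> In h (map snd st).
Proof.
  split. intros [t Ht]. apply in_map_iff. exists (t, h); auto.
  intros Hm. apply in_map_iff in Hm. destruct Hm as ([t h'] & E & Hin). simpl in E; subst. exists t; auto.
Qed.

Lemma dom_map st t : dom st t <-> In t (map fst st).
Proof.
  split. intros [h Ht]. apply in_map_iff. exists (t, h); auto.
  intros Hm. apply in_map_iff in Hm. destruct Hm as ([t' h] & E & Hin). simpl in E; subst. exists h; auto.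
Qed.

Lemma dom_incl st st' t : incl st st' -> dom st t -> dom st' t.
Proof. intros Hi [h Hh]. exists h; auto. Qed.

Lemma ran_incl st st' t : incl st st' -> ran st t -> ran st' t.
Proof. intros Hi [h Hh]. exists h; auto. Qed.

Lemma no_two st w d1 d2 : Inv st -> ~ dom st w -> adj T w d1 -> adj T w d2 ->
  dom st d1 -> dom st d2 -> d1 = d2.
Proof.
  intros (_ & _ & _ & Hc) Hw H1 H2 D1 D2. apply NNPP; intros Hne.
  assert (R : rch T (fun _ => True) d1 d2).
  { apply rch_cons with w; [auto| apply adj_sym; auto | apply rch_one; auto]. }
  apply Hc in R; auto.
  destruct (rch_path _ _ _ _ R) as (q & (Hwk & Hl & Hnd) & Hq).
  apply HF. exists w, (d1 :: q). split; [|split; [|split]].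
  - destruct q. simpl in Hl. congruence. simpl; lia.
  - simpl; auto.
  - constructor; [intros Hin; apply Hw; apply Hq; auto | auto].
  - rewrite last_cons, Hl. apply adj_sym; auto.
Qed.

Lemma add_iso st t h : Inv st -> (forall d, dom st d -> ~ rch T (fun _ => True) t d) ->
  ~ ran st h -> Inv ((t, h) :: st).
Proof.
  intros (I1 & I2 & I3 & I4) Hd Hr.
  assert (Ht : ~ dom st t) by (intros D; apply (Hd t D); constructor; auto).
  assert (Dn : forall x, dom ((t, h) :: st) x <-> x = t \/ dom st x).
  { intros x; split. intros [h' [E|Hin]]. inversion E; auto. right; exists h'; auto.
    intros [->|[h' Hh']]. exists h; simpl; auto. exists h'; simpl; auto. }
  split; [|split; [|split]].
  - intros t1 h1 h2 [E1|E1] [E2|E2]; try (inversion E1; inversion E2; subst; congruence).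
    + inversion E1; subst. exfalso; apply Ht; exists h2; auto.
    + inversion E2; subst. exfalso; apply Ht; exists h1; auto.
    + eauto.
  - intros t1 t2 h1 [E1|E1] [E2|E2]; try (inversion E1; inversion E2; subst; congruence).
    + inversion E1; subst. exfalso; apply Hr; exists t2; auto.
    + inversion E2; subst. exfalso; apply Hr; exists t1; auto.
    + eauto.
  - intros t1 h1 t2 h2 [E1|E1] [E2|E2] A.
    + inversion E1; inversion E2; subst. exfalso; eapply adj_irrefl; eauto.
    + inversion E1; subst. exfalso. apply (Hd t2). exists h2; auto. apply rch_one; auto.
    + inversion E2; subst. exfalso. apply (Hd t1). exists h1; auto. apply rch_one; auto.
      apply adj_sym; auto.
    + eauto.
  - intros t1 t2 D1 D2 R. apply Dn in D1. apply Dn in D2.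
    destruct D1 as [->|D1]; destruct D2 as [->|D2].
    + constructor. apply Dn; auto.
    + exfalso; apply (Hd t2 D2 R).
    + exfalso; apply (Hd t1 D1). apply rch_sym; auto.
    + apply rch_mono with (dom st). intros; apply Dn; auto. auto.
Qed.

Lemma add_nb st t t' h' h : Inv st -> ~ dom st t -> In (t', h') st -> adj T t' t ->
  ~ ran st h -> adj H h' h -> Inv ((t, h) :: st).
Proof.
  intros I Ht Ht' At Hr Ah. pose proof I as (I1 & I2 & I3 & I4).
  assert (Dt' : dom st t') by (exists h'; auto).
  assert (U : forall d, dom st d -> adj T t d -> d = t').
  { intros d Dd Ad. apply (no_two st t); auto. apply adj_sym; auto. }
  assert (Dn : forall x, dom ((t, h) :: st) x <-> x = t \/ dom st x).
  { intros x; split. intros [h1 [E|Hin]]. inversion E; auto. right; exists h1; auto.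
    intros [->|[h1 Hh1]]. exists h; simpl; auto. exists h1; simpl; auto. }
  split; [|split; [|split]].
  - intros t1 h1 h2 [E1|E1] [E2|E2]; try (inversion E1; inversion E2; subst; congruence).
    + inversion E1; subst. exfalso; apply Ht; exists h2; auto.
    + inversion E2; subst. exfalso; apply Ht; exists h1; auto.
    + eauto.
  - intros t1 t2 h1 [E1|E1] [E2|E2]; try (inversion E1; inversion E2; subst; congruence).
    + inversion E1; subst. exfalso; apply Hr; exists t2; auto.
    + inversion E2; subst. exfalso; apply Hr; exists t1; auto.
    + eauto.
  - intros t1 h1 t2 h2 [E1|E1] [E2|E2] A.
    + inversion E1; inversion E2; subst. exfalso; eapply adj_irrefl; eauto.
    + inversion E1; subst. assert (t2 = t') by (apply U; [exists h2; auto | auto]). subst.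
      rewrite (I1 _ _ _ E2 Ht'). apply adj_sym; auto.
    + inversion E2; subst. assert (t1 = t') by (apply U; [exists h1; auto | apply adj_sym; auto]).
      subst. rewrite (I1 _ _ _ E1 Ht'). auto.
    + eauto.
  - intros t1 t2 D1 D2 R. apply Dn in D1. apply Dn in D2.
    assert (Hmono : forall x y, rch T (dom st) x y -> rch T (dom ((t, h) :: st)) x y).
    { intros x y; apply rch_mono. intros; apply Dn; auto. }
    destruct D1 as [->|D1]; destruct D2 as [->|D2].
    + constructor. apply Dn; auto.
    + apply rch_cons with t'. apply Dn; auto. apply adj_sym; auto.
      apply Hmono. apply I4; auto. apply rch_trans with t; auto. apply rch_one; auto.
    + apply rch_step with t'; [ | exact At | apply Dn; auto ].
      apply Hmono. apply I4; auto.
      apply rch_trans with t; auto. apply rch_one; auto. apply adj_sym; auto.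
    + apply Hmono; auto.
Qed.

Lemma forth_rch d t : rch T (fun _ => True) d t -> forall st, Inv st -> dom st d ->
  exists st', Inv st' /\ incl st st' /\ dom st' t.
Proof.
  induction 1 as [|y z R IH A _]; intros st I Dd.
  - exists st; split; auto. split; auto. apply incl_refl.
  - destruct (IH st I Dd) as (st1 & I1 & Inc1 & Dy).
    destruct (classic (dom st1 z)) as [Dz|Dz].
    + exists st1; auto.
    + destruct Dy as [h' Hy]. destruct (Hnbr H HI h' (map snd st1)) as (h & Ah & Hh).
      exists ((z, h) :: st1). split; [|split].
      * apply add_nb with y h'; auto. rewrite ran_map; auto.
      * intros p Hp; right; auto.
      * exists h; simpl; auto.
Qed.

Lemma forth st t : Inv st -> exists st', Inv st' /\ incl st st' /\ dom st' t.
Proof.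
  intros I. destruct (classic (exists d, dom st d /\ rch T (fun _ => True) d t)) as [[d [Dd R]]|Hn].
  - eapply forth_rch; eauto.
  - destruct (Hfresh H HI (map snd st)) as [h Hh].
    exists ((t, h) :: st). split; [|split].
    + apply add_iso; auto. intros d Dd R. apply Hn. exists d; split; auto. apply rch_sym; auto.
      rewrite ran_map; auto.
    + intros p Hp; right; auto.
    + exists h; simpl; auto.
Qed.

Lemma add_path ts xs : forall t0 h0 st, Inv st -> In (t0, h0) st -> length ts = length xs ->
  walk T t0 ts -> walk H h0 xs -> NoDup ts -> NoDup xs ->
  (forall t, In t ts -> ~ dom st t) -> (forall x, In x xs -> ~ ran st x) ->
  exists st', Inv st' /\ incl st st' /\ In (last ts t0, last xs h0) st'.
Proof.
  revert xs; induction ts as [|t1 ts IH]; intros xs t0 h0 st I Hin Hlen Wt Wx Nt Nx Dt Rx.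
  - destruct xs; simpl in Hlen; try lia. exists st; simpl; split; auto. split; auto. apply incl_refl.
  - destruct xs as [|x1 xs]; simpl in Hlen; try lia.
    destruct Wt as [At Wt]; destruct Wx as [Ax Wx].
    inversion Nt; inversion Nx; subst.
    assert (I' : Inv ((t1, x1) :: st)).
    { apply add_nb with t0 h0; auto. apply Dt; simpl; auto. apply Rx; simpl; auto. }
    destruct (IH xs t1 x1 ((t1, x1) :: st) I' (or_introl eq_refl)) as (st' & I2 & Inc & Hl); auto.
    + intros t Ht [h' [E|E]]. inversion E; subst; auto. apply (Dt t); simpl; auto. exists h'; auto.
    + intros x Hx [t' [E|E]]. inversion E; subst; auto. apply (Rx x); simpl; auto. exists t'; auto.
    + exists st'. split; auto. split. intros p Hp; apply Inc; right; auto.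
      rewrite !last_cons; auto.
Qed.

End BF.


Lemma bound_list (A B : Type) (R : A -> list B -> Prop) (l : list A) :
  (forall a, In a l -> exists xs, R a xs) ->
  exists M, forall a, In a l -> exists xs, R a xs /\ length xs <= M.
Proof.
  induction l as [|a l IH]; intros Hl.
  - exists 0; intros a [].
  - destruct IH as [M HM]. intros b Hb; apply Hl; simpl; auto.
    destruct (Hl a (or_introl eq_refl)) as [xs Hxs].
    exists (Nat.max M (length xs)). intros b [<-|Hb].
    + exists xs; split; auto; lia.
    + destruct (HM b Hb) as (ys & Hy & Hly). exists ys; split; auto; lia.
Qed.

Lemma split_last (A : Type) (Q : A -> Prop) (l : list A) :
  (exists a d b, l = a ++ d :: b /\ Q d /\ forall z, In z b -> ~ Q z) \/ (forall z, In z l -> ~ Q z).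
Proof.
  induction l as [|z l IH] using rev_ind.
  - right; intros z [].
  - destruct (classic (Q z)) as [Qz|Qz].
    + left. exists l, z, []. split; [auto | split; [auto | intros ? []]].
    + destruct IH as [(a & d & b & E & Qd & Hb)|Hall].
      * left. exists a, d, (b ++ [z]). split. rewrite E, <- app_assoc. auto.
        split; auto. intros w Hw. apply in_app_iff in Hw. destruct Hw as [Hw|[<-|[]]]; auto.
      * right. intros w Hw. apply in_app_iff in Hw. destruct Hw as [Hw|[<-|[]]]; auto.
Qed.

Lemma walk_split (G : graph) x P a d b : walk G x P -> x :: P = a ++ d :: b ->
  walk G d b /\ last P x = last b d.
Proof.
  intros W E. destruct a as [|a0 a'].
  - simpl in E. inversion E; subst; auto.
  - simpl in E. inversion E; subst. rewrite walk_app in W. destruct W as [_ [_ W]].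
    split; auto. rewrite last_app_gen, last_cons. auto.
Qed.

Lemma walk_in_rch (G : graph) x l z : walk G x l -> In z l -> rch G (fun _ => True) x z.
Proof.
  intros W Hz. destruct (in_split _ _ Hz) as (p & s & ->).
  rewrite walk_app in W. destruct W as [W1 [A _]].
  apply rch_step with (last p x); auto. apply walk_rch; auto.
Qed.

Section Back.
Variables T H : graph.
Hypothesis HF : forest T.
Hypothesis HI : infinitely_connected H.

Lemma back_ii (f : nat -> V T) (Hf : forall i j, i <> j -> ~ joined T (f i) (f j)) st h :
  Inv T H st -> exists st', Inv T H st' /\ incl st st' /\ ran T H st' h.
Proof.
  intros I. destruct (classic (ran T H st h)) as [Hr|Hr].
  { exists st; split; auto. split; auto. apply incl_refl. }
  assert (Ex : exists i, forall d, dom T H st d -> ~ rch T (fun _ => True) (f i) d).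
  { apply NNPP; intros Hn.
    assert (Hc : forall i, exists d, dom T H st d /\ rch T (fun _ => True) (f i) d).
    { intros i; apply NNPP; intros Hni; apply Hn; exists i; intros d Dd R; apply Hni; eauto. }
    set (df := fun i => proj1_sig (constructive_indefinite_description _ (Hc i))).
    assert (Hdf : forall i, dom T H st (df i) /\ rch T (fun _ => True) (f i) (df i)).
    { intros i; unfold df; destruct (constructive_indefinite_description _ (Hc i)); auto. }
    assert (Inj : Injective df).
    { intros i j E. apply NNPP; intros Hne. apply (Hf i j Hne).
      apply (rch_joined _ (fun _ => True)). apply rch_trans with (df i). apply Hdf.
      rewrite E. apply rch_sym, Hdf. }
    assert (Hle := @NoDup_incl_length _ (map df (seq 0 (S (length st)))) (map fst st)).
    rewrite length_map, length_seq, length_map in Hle.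
    enough (S (length st) <= length st) by lia.
    apply Hle. apply Injective_map_NoDup; auto. apply seq_NoDup.
    intros z Hz. apply in_map_iff in Hz. destruct Hz as (i & <- & _). apply dom_map, Hdf. }
  destruct Ex as [i Hi]. exists ((f i, h) :: st). split; [|split].
  - apply add_iso; auto.
  - intros p Hp; right; auto.
  - exists (f i); simpl; auto.
Qed.

Lemma back_i (x0 : V T) (Hub : unbounded_radius (component T x0)) st h :
  Inv T H st -> exists st', Inv T H st' /\ incl st st' /\ ran T H st' h.
Proof.
  intros I. destruct (classic (ran T H st h)) as [Hr|Hr].
  { exists st; split; auto. split; auto. apply incl_refl. }
  destruct (classic (exists d, dom T H st d /\ rch T (fun _ => True) x0 d)) as [[d0 [Dd0 R0]]|Hn].
  2:{ exists ((x0, h) :: st). split; [|split].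
      - apply add_iso; auto. intros d Dd R; apply Hn; eauto.
      - intros p Hp; right; auto.
      - exists x0; simpl; auto. }
  pose proof I as (I1 & I2 & I3 & I4).
  destruct (bound_list _ _ (fun (p : V T * V H) xs => walk H (snd p) xs /\ last xs (snd p) = h /\
     NoDup (snd p :: xs) /\ (forall x, In x xs -> ~ In x (map snd st))) st) as [M HM].
  { intros p _. apply Hpath; auto. rewrite <- ran_map; auto. }
  set (K := M + length st).
  assert (pd0 : joined T x0 d0) by (apply (rch_joined _ _ _ _ R0)).
  destruct (not_all_ex_not _ _ (fun Hall => Hub K (ex_intro _ (exist _ d0 pd0 : V (component T x0)) Hall)))
    as [[vv pv] Hv].
  assert (Rd0v : rch T (fun _ => True) d0 vv).
  { apply rch_trans with x0. apply rch_sym; auto. apply joined_rch; auto. }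
  destruct (rch_path _ _ _ _ Rd0v) as (P & (WP & LP & NP) & _).
  destruct (split_last _ (dom T H st) (d0 :: P)) as [(a & d' & b & E & Dd' & Hb)|Hall].
  2:{ exfalso; apply (Hall d0); simpl; auto. }
  destruct (walk_split _ _ _ _ _ _ WP E) as [Wb Lb].
  assert (Nb : NoDup (d' :: b)) by (rewrite E in NP; apply NoDup_app_remove_l in NP; auto).
  assert (Lbig : M < length b).
  { apply NNPP; intros Hsm.
    assert (Rdd' : rch T (fun _ => True) d0 d').
    { apply rch_trans with vv; auto. apply rch_sym. rewrite <- LP, Lb. apply walk_rch; auto. }
    apply I4 in Rdd'; auto.
    destruct (rch_path _ _ _ _ Rdd') as (q & (Wq & Lq & Nq) & Hq).
    assert (Lenq : length (d0 :: q) <= length st).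
    { rewrite <- (length_map fst st). apply NoDup_incl_length; auto.
      intros z Hz; apply dom_map; auto. }
    assert (Wqb : walk T d0 (q ++ b)) by (rewrite walk_app, Lq; auto).
    destruct (shorten _ _ _ Wqb) as (l'' & W'' & L'' & N'' & Len'' & _).
    rewrite last_app_gen, Lq, <- Lb, LP in L''.
    assert (HP : forall z, In z l'' -> joined T x0 z).
    { intros z Hz. apply (rch_joined _ (fun _ => True)). apply rch_trans with d0; auto.
      apply walk_in_rch with l''; auto. }
    destruct (walk_lift T (fun y => joined T x0 y) d0 l'' W'' HP pd0) as (l3 & W3 & M3).
    apply Hv. exists l3. split; [split; [|split]|].
    - exact W3.
    - apply (sig_inj T (fun y => joined T x0 y)). rewrite (last_lower T (fun y => joined T x0 y)).
      rewrite M3. simpl. auto.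
    - apply (NoDup_map_inv (@proj1_sig _ _)). simpl. rewrite M3. auto.
    - assert (E3 : length (map (@proj1_sig _ _) l3) = length l'') by (rewrite M3; auto).
      rewrite length_map in E3. apply (Nat.le_trans _ (length l'')); [apply Nat.eq_le_incl; exact E3|].
      rewrite length_app in Len''.
      simpl in Lenq. unfold K. lia. }
  destruct Dd' as [hd Hd'].
  destruct (HM _ Hd') as (xs & (Wx & Lx & Nx & Rx) & Lenx). simpl in *.
  set (ts := firstn (length xs) b).
  assert (Ebt : ts ++ skipn (length xs) b = b) by apply firstn_skipn.
  inversion Nb; subst.
  destruct (add_path T H HF ts xs d' hd st I Hd') as (st' & I' & Inc & Hin).
  - unfold ts; apply firstn_length_le; lia.
  - rewrite <- Ebt in Wb. rewrite walk_app in Wb. tauto.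
  - exact Wx.
  - rewrite <- Ebt in H3. apply NoDup_app_remove_r in H3. auto.
  - inversion Nx; auto.
  - intros t Ht. apply Hb. rewrite <- Ebt. apply in_or_app; auto.
  - intros x Hx. rewrite ran_map. apply Rx; auto.
  - exists st'. split; auto. split; auto. exists (last ts d'); auto.
Qed.
End Back.


Section Build.
Variables T H : graph.
Variables (fT : V T -> nat) (gT : nat -> V T) (fH : V H -> nat) (gH : nat -> V H).
Hypothesis hT : forall x, gT (fT x) = x.
Hypothesis hH : forall x, gH (fH x) = x.
Hypothesis Fo : forall st t, Inv T H st -> exists st', Inv T H st' /\ incl st st' /\ dom T H st' t.
Hypothesis Ba : forall st h, Inv T H st -> exists st', Inv T H st' /\ incl st st' /\ ran T H st' h.

Lemma Step st n : exists st', Inv T H st -> Inv T H st' /\ incl st st' /\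
   dom T H st' (gT n) /\ ran T H st' (gH n).
Proof.
  destruct (classic (Inv T H st)) as [I|I].
  - destruct (Fo st (gT n) I) as (s1 & I1 & Inc1 & D1).
    destruct (Ba s1 (gH n) I1) as (s2 & I2 & Inc2 & R2).
    exists s2; intros _. split; auto. split. intros p Hp; auto.
    split; auto. apply dom_incl with s1; auto.
  - exists st; intros X; tauto.
Qed.

Fixpoint sq (n : nat) : list (V T * V H) :=
  match n with
  | 0 => []
  | S n => proj1_sig (constructive_indefinite_description _ (Step (sq n) n))
  end.

Lemma sq_prop n : Inv T H (sq n) /\ (forall m, m < n -> dom T H (sq n) (gT m) /\ ran T H (sq n) (gH m))
  /\ (forall m, m <= n -> incl (sq m) (sq n)).
Proof.
  induction n as [|n IH].
  - split. apply Inv_nil. split. intros; lia. intros m Hm. assert (m = 0) by lia; subst. apply incl_refl.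
  - destruct IH as (I & Hd & Hi).
    assert (Hs : Inv T H (sq n) -> Inv T H (sq (S n)) /\ incl (sq n) (sq (S n)) /\
       dom T H (sq (S n)) (gT n) /\ ran T H (sq (S n)) (gH n)).
    { simpl. destruct (constructive_indefinite_description _ (Step (sq n) n)) as [s Hs]. exact Hs. }
    destruct (Hs I) as (I' & Inc & D & R).
    split; auto. split.
    + intros m Hm. destruct (Nat.eq_dec m n) as [->|Hne]. auto.
      destruct (Hd m) as [D' R']; try lia. split. apply dom_incl with (sq n); auto.
      apply ran_incl with (sq n); auto.
    + intros m Hm. destruct (Nat.eq_dec m (S n)) as [->|Hne]. apply incl_refl.
      intros p Hp. apply Inc. apply (Hi m); auto. lia.
Qed.

Lemma domt t : exists h, In (t, h) (sq (S (fT t))).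
Proof. destruct (sq_prop (S (fT t))) as (_ & Hd & _). destruct (Hd (fT t)) as [[h Hh] _]; try lia.
  rewrite hT in Hh. eauto. Qed.
Lemma rant h : exists t, In (t, h) (sq (S (fH h))).
Proof. destruct (sq_prop (S (fH h))) as (_ & Hd & _). destruct (Hd (fH h)) as [_ [t Ht]]; try lia.
  rewrite hH in Ht. eauto. Qed.

Definition phi t := proj1_sig (constructive_indefinite_description _ (domt t)).
Definition psi h := proj1_sig (constructive_indefinite_description _ (rant h)).

Lemma phi_in t : exists n, In (t, phi t) (sq n).
Proof. exists (S (fT t)). unfold phi. destruct (constructive_indefinite_description _ (domt t)); auto. Qed.
Lemma psi_in h : exists n, In (psi h, h) (sq n).
Proof. exists (S (fH h)). unfold psi. destruct (constructive_indefinite_description _ (rant h)); auto. Qed.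

Lemma common n m p q : In p (sq n) -> In q (sq m) -> Inv T H (sq (n + m)) /\ In p (sq (n + m)) /\ In q (sq (n + m)).
Proof.
  intros Hp Hq. destruct (sq_prop (n + m)) as (I & _ & Hi). split; auto.
  split. apply (Hi n); auto; lia. apply (Hi m); auto; lia.
Qed.

Lemma psi_phi t : psi (phi t) = t.
Proof.
  destruct (phi_in t) as [n Hn]. destruct (psi_in (phi t)) as [m Hm].
  destruct (common _ _ _ _ Hn Hm) as ((I1 & I2 & _) & A & B). symmetry; eapply I2; eauto.
Qed.

Lemma phi_psi h : phi (psi h) = h.
Proof.
  destruct (phi_in (psi h)) as [n Hn]. destruct (psi_in h) as [m Hm].
  destruct (common _ _ _ _ Hn Hm) as ((I1 & I2 & _) & A & B). eapply I1; eauto.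
Qed.

Lemma phi_adj x y : adj T x y -> adj H (phi x) (phi y).
Proof.
  destruct (phi_in x) as [n Hn]. destruct (phi_in y) as [m Hm].
  destruct (common _ _ _ _ Hn Hm) as ((I1 & I2 & I3 & _) & A & B). eauto.
Qed.

Definition Ssub : spanning_subgraph H.
Proof.
  refine (Build_spanning_subgraph H (fun x y => adj T (psi x) (psi y)) _ _ _).
  - intros x y A; apply adj_sym; auto.
  - intros x; apply adj_irrefl.
  - intros x y A. rewrite <- (phi_psi x), <- (phi_psi y). apply phi_adj; auto.
Defined.

Lemma build : has_spanning_copy H T.
Proof.
  exists Ssub. exists phi, psi. split; [|split].
  - apply psi_phi.
  - apply phi_psi.
  - intros x y. simpl. rewrite !psi_phi. tauto.
Qed.
End Build.


Lemma in_le_max (l : list nat) x : In x l -> x <= list_max l.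
Proof.
  intros Hx. assert (Hf : Forall (fun k => k <= list_max l) l) by (apply list_max_le; auto).
  rewrite Forall_forall in Hf. auto.
Qed.

Lemma max_in (l : list nat) : l <> [] -> In (list_max l) l.
Proof.
  induction l as [|a l IH]; intros Hne. congruence.
  simpl. destruct l as [|b l]. simpl. left; lia.
  destruct (Nat.max_spec a (list_max (b :: l))) as [[_ ->]|[_ ->]]; auto.
  right; apply IH; congruence.
Qed.

Lemma nat_inf : ~ finite_set (fun _ : nat => True).
Proof.
  intros [l Hl]. specialize (Hl (S (list_max l)) I). apply in_le_max in Hl. lia.
Qed.

Lemma walk_map (G1 G2 : graph) (f : V G1 -> V G2) :
  (forall x y, adj G1 x y -> adj G2 (f x) (f y)) ->
  forall x l, walk G1 x l -> walk G2 (f x) (map f l).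
Proof. intros Hf x l; revert x; induction l; simpl; auto. intros x [A W]; split; auto. Qed.

Lemma last_map_gen (A B : Type) (f : A -> B) l x : last (map f l) (f x) = f (last l x).
Proof.
  revert x; induction l as [|a l IH]; intros x; simpl; auto.
  destruct l; simpl; auto. simpl in IH. apply IH.
Qed.

Definition lev (x : nat) := fst (Cantor.of_nat x).

Definition H1 : graph.
Proof.
  refine (@mkGraph nat (fun x y => lev x = S (lev y) \/ lev y = S (lev x)) _ _).
  - intros x y [E|E]; auto.
  - intros x [E|E]; lia.
Defined.

Lemma H1_count : countably_infinite H1.
Proof. exists (fun x => x), (fun x => x); auto. Qed.

Lemma lev_to n m : lev (Cantor.to_nat (n, m)) = n.
Proof. unfold lev. rewrite Cantor.cancel_of_to. auto. Qed.

Lemma connected_of (G : graph) (F : V G -> Prop) :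
  (forall u v, ~ F u -> ~ F v -> rch G (fun x => ~ F x) u v) -> connected (delete G F).
Proof.
  intros Hr [u pu] [v pv]. apply (rch_joined _ (fun _ => True)).
  apply (rch_induced G (fun x => ~ F x)). apply Hr; auto.
Qed.

Lemma H1_ic : infinitely_connected H1.
Proof.
  split. apply nat_inf.
  intros F [lf Hlf]. apply connected_of.
  set (N := S (list_max lf)).
  set (z := fun n => Cantor.to_nat (n, N)).
  assert (Hz : forall n, ~ F (z n)).
  { intros n Fz. apply Hlf in Fz. apply in_le_max in Fz. unfold z in Fz.
    pose proof (Cantor.to_nat_non_decreasing n N). unfold N in *. lia. }
  assert (Hzz : forall n m, rch H1 (fun x => ~ F x) (z n) (z (n + m))).
  { intros n m. induction m. replace (n + 0) with n by lia. constructor; auto.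
    apply rch_step with (z (n + m)); auto. simpl. unfold z; rewrite !lev_to. lia. }
  assert (Hu : forall u m, ~ F u -> rch H1 (fun x => ~ F x) u (z (S (lev u) + m))).
  { intros u m Fu. apply rch_cons with (z (S (lev u))). auto.
    simpl. unfold z; rewrite !lev_to. auto. apply Hzz. }
  intros u v Fu Fv.
  set (M := Nat.max (lev u) (lev v)).
  apply rch_trans with (z (S M)).
  - replace (S M) with (S (lev u) + (M - lev u)) by lia. apply Hu; auto.
  - apply rch_sym. replace (S M) with (S (lev v) + (M - lev v)) by lia. apply Hu; auto.
Qed.

Lemma H1_walk x l : walk H1 x l -> lev (last l x) <= lev x + length l.
Proof.
  revert x; induction l as [|a l IH]; intros x W. simpl; lia.
  destruct W as [A W]. rewrite last_cons. specialize (IH a W). simpl in *. lia.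
Qed.

Lemma fin_comps (T : graph) : ~ infinitely_many_components T ->
  exists S : list (V T), forall t, exists s, In s S /\ joined T s t.
Proof.
  intros Hn. apply NNPP; intros Hs.
  assert (Hc : forall S : list (V T), exists t, forall s, In s S -> ~ joined T s t).
  { intros S. apply NNPP; intros H2. apply Hs. exists S. intros t. apply NNPP; intros H3.
    apply H2. exists t. intros s Hs' J. apply H3; eauto. }
  set (pick := fun S => proj1_sig (constructive_indefinite_description _ (Hc S))).
  assert (Hp : forall S s, In s S -> ~ joined T s (pick S)).
  { intros S; unfold pick; destruct (constructive_indefinite_description _ (Hc S)); auto. }
  set (g := fix g n := match n with 0 => [] | S n => g n ++ [pick (g n)] end).
  assert (Hg : forall i j, i < j -> In (pick (g i)) (g j)).
  { intros i j; induction j; intros Hij. lia. simpl. apply in_or_app.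
    destruct (Nat.eq_dec i j) as [->|Hne]. right; simpl; auto. left; apply IHj; lia. }
  apply Hn. exists (fun n => pick (g n)). intros i j Hij.
  destruct (Nat.lt_total i j) as [Hl|[E|Hl]]; [| congruence |].
  - apply Hp, Hg; auto.
  - intros J. apply joined_sym in J. revert J. apply Hp, Hg; auto.
Qed.

Lemma bound_nat (A : Type) (Q : A -> nat -> Prop) (l : list A) :
  (forall a, In a l -> exists n, Q a n) -> (forall a n m, Q a n -> n <= m -> Q a m) ->
  exists B, forall a, In a l -> Q a B.
Proof.
  intros Hl Hm. induction l as [|a l IH].
  - exists 0; intros a [].
  - destruct IH as [B HB]. intros b Hb; apply Hl; simpl; auto.
    destruct (Hl a (or_introl eq_refl)) as [n Hn].
    exists (Nat.max B n). intros b [<-|Hb]. apply Hm with n; auto; lia. apply Hm with B; auto; lia.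
Qed.

Lemma last_lower_eq (G : graph) (P : V G -> Prop) (l : list (V (induced G P))) a t (pt : P t) :
  last l a = exist _ t pt -> last (map (@proj1_sig _ _) l) (proj1_sig a) = t.
Proof. intros E. rewrite <- last_lower, E. reflexivity. Qed.

Lemma radius_part (T : graph) :
  (forall H : graph, countably_infinite H -> infinitely_connected H -> has_spanning_copy H T) ->
  some_component_unbounded_radius T \/ infinitely_many_components T.
Proof.
  intros Hall. apply NNPP; intros Hn.
  destruct (fin_comps T) as [Sl HS]. intros X; apply Hn; auto.
  assert (Hk : forall x, exists k, radius_le (component T x) k).
  { intros x. apply NNPP; intros X. apply Hn. left. exists x. intros k R. apply X; eauto. }
  destruct (Hall H1 H1_count H1_ic) as (Sb & phi & psi & Hpp & Hpp' & Ha).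
  assert (Aphi : forall x y, adj T x y -> adj H1 (phi x) (phi y)).
  { intros x y A. apply Ha in A. apply (sadj_sub H1 Sb); auto. }
  destruct (bound_nat _ (fun s n => forall t, joined T s t -> lev (phi t) <= n) Sl) as [B HB].
  - intros s _. destruct (Hk s) as [k [u Hu]].
    exists (lev (phi (proj1_sig u)) + k). intros t pt.
    destruct (Hu (exist _ t pt)) as (l & (W & Ll & _) & Len).
    apply walk_lower in W. apply (walk_map T H1 phi Aphi) in W. apply H1_walk in W.
    rewrite last_map_gen, (last_lower_eq T (fun y => joined T s y) l u t pt Ll) in W.
    rewrite !length_map in W. eapply Nat.le_trans; [exact W|]. apply Nat.add_le_mono_l; exact Len.
  - intros a n m Q Hnm t Jt. specialize (Q t Jt). lia.
  - set (h := Cantor.to_nat (S B, 0)).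
    destruct (HS (psi h)) as (s & Hs & J).
    specialize (HB s Hs (psi h) J). rewrite Hpp' in HB. unfold h in HB. rewrite lev_to in HB. lia.
Qed.




Lemma lastc (A : Type) (a d : A) l : last (a :: l) d = last l a.
Proof. revert a d; induction l as [|b l IH]; intros a d; auto.
  change (last (b :: l) d = last (b :: l) a). rewrite !IH. auto. Qed.

Lemma last_in_cons (A : Type) (p : list A) : forall d, In (last p d) (d :: p).
Proof.
  induction p as [|a p IH]; intros d. simpl; auto.
  rewrite lastc. right. apply IH.
Qed.

Lemma last_in_ne (A : Type) (p : list A) d : p <> [] -> In (last p d) p.
Proof.
  destruct p as [|a p]; intros Hne. congruence.
  pose proof (last_in_cons A p a) as Hl.
  rewrite lastc. auto.
Qed.

Lemma NoDup_app_disj (A : Type) (l1 l2 : list A) x : NoDup (l1 ++ l2) -> In x l1 -> In x l2 -> False.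
Proof.
  induction l1 as [|a l1 IH]; simpl; intros N H1 H2; auto.
  inversion N; subst. destruct H1 as [<-|H1]; eauto.
  apply H3. apply in_or_app; auto.
Qed.

Lemma cyc_nb (G : graph) v0 l : walk G v0 l -> NoDup (v0 :: l) -> adj G (last l v0) v0 ->
  2 <= length l -> forall y, In y (v0 :: l) ->
  exists a b, In a (v0 :: l) /\ In b (v0 :: l) /\ a <> b /\ adj G y a /\ adj G y b.
Proof.
  intros W N A Hlen y Hy.
  destruct Hy as [<-|Hy].
  - destruct l as [|y1 l1]. simpl in Hlen; lia.
    exists y1, (last (y1 :: l1) v0). split; [simpl; auto|split; [|split; [|split]]].
    + right. apply last_in_ne. congruence.
    + rewrite (last_cons G y1 v0 l1). intros E.
      destruct l1 as [|z l1]. simpl in Hlen; lia.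
      pose proof (last_in_ne _ (z :: l1) y1) as Hi. rewrite <- E in Hi.
      inversion N as [|? ? _ N1]; inversion N1 as [|? ? Nn _]. apply Nn, Hi; congruence.
    + destruct W; auto.
    + apply adj_sym; auto.
  - destruct (in_split _ _ Hy) as (p & s & ->).
    rewrite walk_app in W. destruct W as [Wp [Ay Ws]].
    exists (last p v0), (match s with [] => v0 | y' :: _ => y' end).
    split; [|split; [|split; [|split]]].
    + destruct (last_in_cons _ p v0) as [E|Hi]. rewrite <- E; simpl; auto.
      right; apply in_or_app; auto.
    + destruct s as [|y' s]. simpl; auto. right; apply in_or_app; simpl; auto.
    + destruct s as [|y' s].
      * destruct p as [|p0 p]. simpl in Hlen; lia.
        intros E. pose proof (last_in_ne _ (p0 :: p) v0) as Hi. rewrite E in Hi.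
        inversion N as [|? ? Nv _]. apply Nv. change (In v0 ((p0 :: p) ++ [y])). apply in_or_app. left; apply Hi; congruence.
      * intros E. apply (NoDup_app_disj _ (v0 :: p) (y :: y' :: s) (last p v0)).
        exact N. apply last_in_cons. rewrite E; simpl; auto.
    + apply adj_sym; auto.
    + destruct s as [|y' s]. rewrite last_app_gen in A. simpl in A. auto.
      destruct Ws; auto.
Qed.

Section H2.
Variable L : nat.
Hypothesis HL : 2 <= L.

Definition uq q := fst (Cantor.of_nat (fst (Cantor.of_nat q))).
Definition vq q := snd (Cantor.of_nat (fst (Cantor.of_nat q))).

Lemma of_nat_le q : fst (Cantor.of_nat q) + snd (Cantor.of_nat q) <= q.
Proof.
  pose proof (Cantor.to_nat_non_decreasing (fst (Cantor.of_nat q)) (snd (Cantor.of_nat q))) as E.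
  rewrite <- surjective_pairing, Cantor.cancel_to_of in E. lia.
Qed.

Lemma uq_le q : uq q <= q.
Proof. unfold uq. pose proof (of_nat_le q). pose proof (of_nat_le (fst (Cantor.of_nat q))). lia. Qed.
Lemma vq_le q : vq q <= q.
Proof. unfold vq. pose proof (of_nat_le q). pose proof (of_nat_le (fst (Cantor.of_nat q))). lia. Qed.

Definition pt q j := if j =? 0 then uq q else if j =? L then vq q else S q * L + (j - 1).

Lemma pt_0 q : pt q 0 = uq q.
Proof. reflexivity. Qed.
Lemma pt_L q : pt q L = vq q.
Proof. unfold pt. replace (L =? 0) with false by (symmetry; apply Nat.eqb_neq; lia). rewrite Nat.eqb_refl. auto. Qed.
Lemma pt_mid q j : 1 <= j -> j < L -> pt q j = S q * L + (j - 1).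
Proof. intros. unfold pt. replace (j =? 0) with false by (symmetry; apply Nat.eqb_neq; lia). replace (j =? L) with false by (symmetry; apply Nat.eqb_neq; lia). auto. Qed.

Lemma big q : q < S q * L.
Proof. nia. Qed.

Lemma uniq q q' a b : S q * L + a = S q' * L + b -> a < L -> b < L -> q = q' /\ a = b.
Proof.
  intros E Ha Hb. destruct (Nat.lt_total q q') as [Hq|[Hq|Hq]].
  - exfalso. assert (S (S q) * L <= S q' * L) by (apply Nat.mul_le_mono_r; lia). nia.
  - subst; lia.
  - exfalso. assert (S (S q') * L <= S q * L) by (apply Nat.mul_le_mono_r; lia). nia.
Qed.

Definition E2 x y := exists q j, j < L /\ x = pt q j /\ y = pt q (S j).

Lemma E2_irrefl x : ~ E2 x x.
Proof.
  intros (q & j & Hj & E1 & E2').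
  rewrite E1 in E2'. clear E1.
  destruct (Nat.eq_dec j 0) as [->|Hj0].
  - rewrite pt_0, pt_mid in E2'; try lia. pose proof (uq_le q); pose proof (big q). lia.
  - destruct (Nat.eq_dec (S j) L) as [Hs|Hs].
    + rewrite Hs, pt_L, pt_mid in E2'; try lia. pose proof (vq_le q); pose proof (big q). lia.
    + rewrite !pt_mid in E2'; lia.
Qed.

Definition H2 : graph.
Proof.
  refine (@mkGraph nat (fun x y => E2 x y \/ E2 y x) _ _).
  - intros x y [A|A]; auto.
  - intros x [A|A]; eapply E2_irrefl; eauto.
Defined.

Lemma H2_count : countably_infinite H2.
Proof. exists (fun x => x), (fun x => x); auto. Qed.

Lemma H2_ic : infinitely_connected H2.
Proof.
  split. apply nat_inf.
  intros F [lf Hlf]. apply connected_of.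
  intros u v Fu Fv.
  set (N := S (list_max lf)).
  set (q := Cantor.to_nat (Cantor.to_nat (u, v), N)).
  assert (Hu : uq q = u). { unfold uq, q. rewrite (Cantor.cancel_of_to (Cantor.to_nat (u, v), N)). cbn [fst]. rewrite (Cantor.cancel_of_to (u, v)). auto. }
  assert (Hv : vq q = v). { unfold vq, q. rewrite (Cantor.cancel_of_to (Cantor.to_nat (u, v), N)). cbn [fst]. rewrite (Cantor.cancel_of_to (u, v)). auto. }
  assert (Hq : N <= q) by (unfold q; pose proof (Cantor.to_nat_non_decreasing (Cantor.to_nat (u, v)) N); lia).
  assert (Hnf : forall j, j <= L -> ~ F (pt q j)).
  { intros j Hj. destruct (Nat.eq_dec j 0) as [->|H0]. rewrite pt_0, Hu; auto.
    destruct (Nat.eq_dec j L) as [->|H1]. rewrite pt_L, Hv; auto.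
    rewrite pt_mid; try lia. intros Fz. apply Hlf in Fz. apply in_le_max in Fz.
    pose proof (big q). unfold N in Hq. lia. }
  assert (Hr : forall j, j <= L -> rch H2 (fun x => ~ F x) (pt q 0) (pt q j)).
  { induction j; intros Hj. constructor; apply Hnf; lia.
    apply rch_step with (pt q j). apply IHj; lia. left. exists q, j; split; auto; lia.
    apply Hnf; auto. }
  rewrite <- Hu, <- Hv, <- pt_L. apply Hr; auto.
Qed.

Lemma nb q j z : 1 <= j -> j < L -> adj H2 (pt q j) z ->
  z = pt q (j - 1) \/ z = pt q (S j) \/ S (S q) * L <= z.
Proof.
  intros Hj1 HjL [(q' & j' & Hj' & E1 & E2')|(q' & j' & Hj' & E1 & E2')].
  - destruct (Nat.eq_dec j' 0) as [->|H0].
    + rewrite pt_0, pt_mid in E1; try lia. pose proof (uq_le q').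
      right; right. rewrite E2', pt_mid; try lia.
      assert (S (S q) <= S q') by (pose proof (big q); nia).
      assert (S (S q) * L <= S q' * L) by (apply Nat.mul_le_mono_r; lia). lia.
    + rewrite !pt_mid in E1; try lia.
      destruct (uniq q q' (j - 1) (j' - 1)) as [<- Ej]; try lia.
      right; left. rewrite E2'. f_equal. lia.
  - destruct (Nat.eq_dec (S j') L) as [Hs|Hs].
    + rewrite Hs, pt_L, pt_mid in E2'; try lia. pose proof (vq_le q').
      right; right. rewrite E1. rewrite (pt_mid q' j'); [|lia|lia].
      assert (S (S q) <= S q') by (pose proof (big q); nia).
      assert (S (S q) * L <= S q' * L) by (apply Nat.mul_le_mono_r; lia). lia.
    + rewrite !(pt_mid _ (S j')), pt_mid in E2'; try lia.
      destruct (uniq q q' (j - 1) (S j' - 1)) as [<- Ej]; try lia.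
      left. rewrite E1. f_equal. lia.
Qed.

Lemma adj_big x y : adj H2 x y -> y <= x -> exists q j, 1 <= j /\ j < L /\ x = pt q j.
Proof.
  intros [(q & j & Hj & E1 & E2')|(q & j & Hj & E1 & E2')] Hyx.
  - destruct (Nat.eq_dec j 0) as [->|H0].
    + rewrite pt_0 in E1. rewrite pt_mid in E2'; try lia. pose proof (uq_le q). pose proof (big q). lia.
    + exists q, j; repeat split; auto; lia.
  - destruct (Nat.eq_dec (S j) L) as [Hs|Hs].
    + rewrite Hs, pt_L in E2'. exfalso. rewrite pt_mid in E1; try lia.
      pose proof (vq_le q). pose proof (big q). lia.
    + exists q, (S j); repeat split; auto; lia.
Qed.

Lemma girth v0 l : walk H2 v0 l -> NoDup (v0 :: l) -> adj H2 (last l v0) v0 -> 2 <= length l ->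
  L <= S (length l).
Proof.
  intros W N A Hlen. set (c := v0 :: l).
  pose proof (cyc_nb H2 v0 l W N A Hlen) as Cn. fold c in Cn.
  set (xs := list_max c).
  assert (Hxs : In xs c) by (apply max_in; unfold c; congruence).
  assert (Hle : forall y, In y c -> y <= xs) by (intros; apply in_le_max; auto).
  destruct (Cn xs Hxs) as (a & _ & Ha & _ & _ & Aa & _).
  destruct (adj_big xs a Aa (Hle a Ha)) as (q & j0 & Hj1 & Hj2 & Exs).
  assert (Hbound : forall y, In y c -> y < S (S q) * L).
  { intros y Hy. apply Hle in Hy. rewrite Exs, (pt_mid q j0) in Hy; [|lia|lia]. nia. }
  assert (K : forall j, 1 <= j -> j < L -> In (pt q j) c -> In (pt q (j - 1)) c /\ In (pt q (S j)) c).
  { intros j H1 H2' Hin. destruct (Cn _ Hin) as (a1 & b1 & Ia & Ib & Hab & A1 & B1).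
    destruct (nb q j a1 H1 H2' A1) as [Ea|[Ea|Ea]]; [| |apply Hbound in Ia; lia];
    (destruct (nb q j b1 H1 H2' B1) as [Eb|[Eb|Eb]]; [| |apply Hbound in Ib; lia]);
    subst; try congruence; auto. }
  assert (Down : forall d, d <= j0 -> In (pt q (j0 - d)) c).
  { induction d; intros Hd. rewrite Nat.sub_0_r, <- Exs; auto.
    replace (j0 - S d) with (j0 - d - 1) by lia. apply K; try lia. apply IHd; lia. }
  assert (Up : forall d, j0 + d <= L -> In (pt q (j0 + d)) c).
  { induction d; intros Hd. rewrite Nat.add_0_r, <- Exs; auto.
    replace (j0 + S d) with (S (j0 + d)) by lia. apply K; try lia. apply IHd; lia. }
  assert (All : forall j, j <= L -> In (pt q j) c).
  { intros j Hj. destruct (Nat.le_gt_cases j j0).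
    replace j with (j0 - (j0 - j)) by lia. apply Down; lia.
    replace j with (j0 + (j - j0)) by lia. apply Up; lia. }
  set (lst := uq q :: map (fun k => S q * L + k) (seq 0 (L - 1))).
  assert (Hl : length lst = L) by (unfold lst; simpl; rewrite length_map, length_seq; lia).
  assert (Hnd : NoDup lst).
  { constructor.
    - intros Hi. apply in_map_iff in Hi. destruct Hi as (k & Ek & _).
      pose proof (uq_le q). pose proof (big q). lia.
    - apply Injective_map_NoDup. intros x y E; lia. apply seq_NoDup. }
  assert (Hinc : incl lst c).
  { intros z [<-|Hz]. rewrite <- pt_0. apply All; lia.
    apply in_map_iff in Hz. destruct Hz as (k & <- & Hk). apply in_seq in Hk.
    replace (S q * L + k) with (pt q (S k)) by (rewrite pt_mid; try lia; f_equal; lia).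
    apply All; lia. }
  pose proof (NoDup_incl_length Hnd Hinc) as Hc. rewrite Hl in Hc. exact Hc.
Qed.
End H2.

Lemma forest_part (T : graph) :
  (forall H : graph, countably_infinite H -> infinitely_connected H -> has_spanning_copy H T) ->
  forest T.
Proof.
  intros Hall [v0 [l (Hlen & W & N & A)]].
  assert (HL : 2 <= length l + 2) by lia.
  destruct (Hall (H2 (length l + 2) HL) (H2_count _ HL) (H2_ic _ HL)) as (Sb & phi & psi & Hpp & Hpp' & Ha).
  assert (Aphi : forall x y, adj T x y -> adj (H2 (length l + 2) HL) (phi x) (phi y)).
  { intros x y A'. apply Ha in A'. apply (sadj_sub _ Sb); auto. }
  pose proof (girth (length l + 2) HL (phi v0) (map phi l)) as Gi.
  rewrite length_map in Gi.
  enough (length l + 2 <= S (length l)) by lia.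
  apply Gi.
  - apply (walk_map T (H2 (length l + 2) HL) phi Aphi); auto.
  - change (NoDup (map phi (v0 :: l))). apply Injective_map_NoDup; auto.
    intros x y E. rewrite <- (Hpp x), <- (Hpp y), E. auto.
  - rewrite last_map_gen. apply Aphi. auto.
  - auto.
Qed.

Theorem mainTheorem12 (T : graph) (hT : countably_infinite T) :
  (forall H : graph, countably_infinite H -> infinitely_connected H ->
     has_spanning_copy H T)
  <->
  (forest T /\
   (some_component_unbounded_radius T \/ infinitely_many_components T)).
Proof.
  split.
  - intros Hall. split. apply forest_part; auto. apply radius_part; auto.
  - intros [HF Hc] H hH HI.
    destruct hT as (fT & gT & h1 & _). destruct hH as (fH & gH & h2 & _).
    apply (build T H fT gT fH gH h1 h2).
    + intros st t I. apply forth; auto.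
    + intros st h I. destruct Hc as [[x0 Hub]|[f Hf]].
      * eapply back_i; eauto.
      * eapply back_ii; eauto.
Qed.
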